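(* Let $\mathcal{M}$ be a causal MDP and run C-UCBVI with confidence parameter $\delta>0$, both as described in the context. Let $\mathcal{E}$ be the event that $V_{k,h}(s)\ge V_h^*(s)$ for all episodes $k$, all steps $h\in[H]$ and all states $s\in\mathcal{S}$. Then $\Pr(\mathcal{E})\ge1-\delta$.
   Context: Causal MDP: finite state set $\mathcal{S}$ ($|\mathcal{S}|=S$), action set $\mathcal{A}$ (interventions), finite set $\mathcal{Z}$ ($|\mathcal{Z}|=Z$) of possible values of the parent variables. Unknown transitions $\mathbb{P}(s'\mid s,\mathbf{z})$, known conditional distributions $P(\mathbf{z}\mid s,a)$, known rewards $R(s,\mathbf{z})\in[0,1]$; $\mathbb{P}(s'\mid s,a)=\sum_{\mathbf{z}}\mathbb{P}(s'\mid s,\mathbf{z})P(\mathbf{z}\mid s,a)$, $R(s,a)=\sum_{\mathbf{z}}R(s,\mathbf{z})P(\mathbf{z}\mid s,a)$. Episodic interaction with horizon $H$, $K$ episodes, $T=KH$: in episode $k$ the initial state $s_{k,1}$ is arbitrary; at step $h$ the agent observes $s_{k,h}$, picks $a_{k,h}$, observes $\mathbf{z}_{k,h}\sim P(\cdot\mid s_{k,h},a_{k,h})$, and $s_{k,h+1}\sim\mathbb{P}(\cdot\mid s_{k,h},\mathbf{z}_{k,h})$. For a policy $\pi:\mathcal{S}\times[H]\to\mathcal{A}$, $V_h^\pi(s)=\mathbb{E}[\sum_{h'=h}^H R(s_{h'},\pi(s_{h'},h'))\mid s_h=s]$ and $V_h^*(s)=\sup_\pi V_h^\pi(s)$. C-UCBVI: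 before episode $k$, from all earlier tuples $(s,a,\mathbf{z},s')$, let $N_k(s,\mathbf{z},y)$ count tuples with state $s$, parent value $\mathbf{z}$, next state $y$; $N_k(s,\mathbf{z})=\sum_yN_k(s,\mathbf{z},y)$; $\hat{\mathbb{P}}_k(y\mid s,\mathbf{z})=N_k(s,\mathbf{z},y)/N_k(s,\mathbf{z})$ if $N_k(s,\mathbf{z})>0$. With $L=\log(5SHKZT/\delta)$, $b_{k,h}(s,\mathbf{z})=7HL\sqrt{S/N_k(s,\mathbf{z})}$. Set $V_{k,H+1}\equiv0$; for $h=H,\dots,1$: $q_{k,h}(s,\mathbf{z})=\min\{H,R(s,\mathbf{z})+\sum_y\hat{\mathbb{P}}_k(y\mid s,\mathbf{z})V_{k,h+1}(y)+b_{k,h}(s,\mathbf{z})\}$ if $N_k(s,\mathbf{z})>0$, else $H$; $Q_{k,h}(s,a)=\sum_{\mathbf{z}}P(\mathbf{z}\mid s,a)q_{k,h}(s,\mathbf{z})$; $V_{k,h}(s)=\max_aQ_{k,h}(s,a)$. The agent plays $a_{k,h}=\arg\max_aQ_{k,h}(s_{k,h},a)$. *)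

(* Defs.v *)
From mathcomp Require Import all_boot all_order all_algebra.
From mathcomp Require Import classical_sets reals exp.
Set Implicit Arguments. Unset Strict Implicit. Unset Printing Implicit Defensive.
Import Order.TTheory GRing.Theory Num.Theory.
Local Open Scope ring_scope.
Local Open Scope classical_set_scope.

(* A causal MDP: unknown transitions P(s'|s,z), known P(z|s,a), known R(s,z). *)
Record cmdp (R : realType) (S A Z : finType) := CMDP {
  trans : S -> Z -> S -> R;
  pz    : S -> A -> Z -> R;
  rew   : S -> Z -> R
}.

Definition valid_cmdp (R : realType) (S A Z : finType) (M : cmdp R S A Z) : Prop :=
  [/\ (forall s z s', 0 <= trans M s z s'),
      (forall s z, \sum_(s' : S) trans M s z s' = 1),
      (forall s a z, 0 <= pz M s a z),
      (forall s a, \sum_(z : Z) pz M s a z = 1) &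
      (forall s z, 0 <= rew M s z <= 1)].

Section CausalMDP.
Variables (R : realType) (S A Z : finType) (M : cmdp R S A Z) (H K : nat).

Definition Psa (s : S) (a : A) (s' : S) : R :=
  \sum_(z : Z) trans M s z s' * pz M s a z.
Definition Rsa (s : S) (a : A) : R := \sum_(z : Z) rew M s z * pz M s a z.

(* V^pi, indexed by the number m of remaining steps: V^pi_h = Vpi pi (H+1-h).
   At remaining m+1 the current step is h = H - m. Policies pi : S -> nat -> A
   (pi s h = action at state s, step h). *)
Fixpoint Vpi (pi : S -> nat -> A) (m : nat) (s : S) : R :=
  match m with
  | 0 => 0
  | m'.+1 => Rsa s (pi s (H - m')%N) +
             \sum_(s' : S) Psa s (pi s (H - m')%N) s' * Vpi pi m' s'
  end.

Definition Vpi_h (pi : S -> nat -> A) (h : nat) (s : S) : R := Vpi pi (H.+1 - h) s.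

Definition Vstar (h : nat) (s : S) : R := sup (range (fun pi => Vpi_h pi h s)).

Definition tup := (S * A * Z * S)%type.

Definition N3 (D : seq tup) (s : S) (z : Z) (y : S) : nat :=
  count (fun x : tup => [&& x.1.1.1 == s, x.1.2 == z & x.2 == y]) D.
Definition N2 (D : seq tup) (s : S) (z : Z) : nat := (\sum_(y : S) N3 D s z y)%N.
Definition Phat (D : seq tup) (y : S) (s : S) (z : Z) : R :=
  (N3 D s z y)%:R / (N2 D s z)%:R.

Variable delta : R.
Definition Tn : nat := (K * H)%N.
Definition Lconf : R := ln ((5 * #|S| * H * K * #|Z| * Tn)%N%:R / delta).
Definition bonus (D : seq tup) (s : S) (z : Z) : R :=
  7 * H%:R * Lconf * Num.sqrt (#|S|%:R / (N2 D s z)%:R).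

(* q_{k,h}, Q_{k,h} given the next-step value function Vn = V_{k,h+1} *)
Definition qhat (D : seq tup) (Vn : S -> R) (s : S) (z : Z) : R :=
  if (0 < N2 D s z)%N then
    Num.min H%:R (rew M s z + \sum_(y : S) Phat D y s z * Vn y + bonus D s z)
  else H%:R.
Definition Qof (D : seq tup) (Vn : S -> R) (s : S) (a : A) : R :=
  \sum_(z : Z) pz M s a z * qhat D Vn s z.

(* Optimistic value, by number of remaining steps: V_{k,h} = Vrem D (H+1-h). *)
Fixpoint Vrem (D : seq tup) (m : nat) (s : S) : R :=
  match m with
  | 0 => 0
  | m'.+1 => sup (range (Qof D (Vrem D m') s))
  end.
Definition Vhat (D : seq tup) (h : nat) (s : S) : R := Vrem D (H.+1 - h) s.
Definition Qhat (D : seq tup) (h : nat) (s : S) (a : A) : R :=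
  Qof D (Vhat D h.+1) s a.

(* Interaction protocol. [init D] chooses the (arbitrary, possibly adaptive)
   initial state of an episode from the data so far; [tb] breaks ties in argmax.
   State: (data so far, current next-state, probability weight). *)
Variables (init : seq tup -> S) (tb : (A -> R) -> A).

Definition step (st : seq tup * S * R) (o : Z * S) : seq tup * S * R :=
  let: (D, cur, w) := st in
  let n := size D in
  let k := (n %/ H)%N in                 (* episode index, 0-based *)
  let h := (n %% H).+1 in                (* step index in 1..H *)
  let s := if (n %% H == 0)%N then init D else cur in
  let Dk := take (k * H) D in            (* data from earlier episodes *)
  let a := tb (Qhat Dk h s) in
  let: (z, s') := o in
  (rcons D (s, a, z, s'), s', w * pz M s a z * trans M s z s').

Definition run (om : seq (Z * S)) : seq tup * S * R :=
  foldl step ([::], init [::], 1) om.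

Definition eventE (D : seq tup) : bool :=
  [forall k : 'I_K, [forall h : 'I_H, [forall s : S,
     Vstar h.+1 s <= Vhat (take (k * H) D) h.+1 s]]].

(* Pr(E): sum, over all sequences of the T = KH outcomes (z_t, s'_t), of the
   probability of the sequence (product of the conditional probabilities)
   times the indicator of E. *)
Definition probE : R :=
  \sum_(om : (Tn).-tuple (Z * S))
     let: (D, _, w) := run om in w * (eventE D)%:R.

End CausalMDP.

(* Main.v *)
Require Import Defs.
From mathcomp Require Import all_boot all_order all_algebra.
From mathcomp Require Import classical_sets reals exp.
From mathcomp Require Import ring lra sequences zify.
Import Order.TTheory GRing.Theory Num.Theory.
Local Open Scope ring_scope.
Set Implicit Arguments. Unset Strict Implicit. Unset Printing Implicit Defensive.

Lemma sum_tupleS (R : realType) (T : finType) n (F : n.+1.-tuple T -> R) :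
  \sum_(t : n.+1.-tuple T) F t = \sum_(x : T) \sum_(t : n.-tuple T) F [tuple of x :: t].
Proof.
rewrite pair_big /=.
rewrite (reindex (fun p : T * n.-tuple T => [tuple of p.1 :: p.2])) //=.
exists (fun t : n.+1.-tuple T => (thead t, [tuple of behead t])).
  by move=> [x t] _ /=; congr pair; apply: val_inj.
move=> t _; apply: val_inj => /=.
by case: t => [[|x s] //=].
Qed.

Section Mart.
Variables (R : realType) (S A Z : finType) (M : cmdp R S A Z) (H K : nat).
Variables (delta : R) (init : seq (tup S A Z) -> S) (tb : (A -> R) -> A).

Definition sOf (D : seq (tup S A Z)) (cur : S) : S :=
  if (size D %% H == 0)%N then init D else cur.
Definition aOf (D : seq (tup S A Z)) (cur : S) : A :=
  tb (Qhat M H K delta (take ((size D %/ H) * H) D) ((size D %% H).+1) (sOf D cur)).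

Lemma stepE D cur w (o : Z * S) :
  step M H K delta init tb (D, cur, w) o =
  (rcons D (sOf D cur, aOf D cur, o.1, o.2), o.2,
   w * pz M (sOf D cur) (aOf D cur) o.1 * trans M (sOf D cur) o.1 o.2).
Proof. by case: o. Qed.

Hypothesis Mv : valid_cmdp M.

Lemma supermart (G : seq (tup S A Z) -> R) :
  (forall D s a, \sum_(o : Z * S) pz M s a o.1 * trans M s o.1 o.2 *
       G (rcons D (s, a, o.1, o.2)) <= G D) ->
  forall n D cur w, 0 <= w ->
  \sum_(om : n.-tuple (Z * S))
     (let: (D', _, w') := foldl (step M H K delta init tb) (D, cur, w) om in w' * G D')
  <= w * G D.
Proof.
case: Mv => tr0 _ pz0 _ _ HG.
elim=> [|n IH] D cur w w0.
  rewrite (big_pred1 [tuple]) /=; last by move=> t; apply/esym/eqP; exact: tuple0.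
  by [].
rewrite sum_tupleS.
apply: le_trans (_ : \sum_(o : Z * S) w * (pz M (sOf D cur) (aOf D cur) o.1 *
    trans M (sOf D cur) o.1 o.2 * G (rcons D (sOf D cur, aOf D cur, o.1, o.2))) <= _).
  apply: ler_sum => o _.
  case: o => z s'; rewrite /=.
  apply: le_trans (IH _ _ _ _) _.
    by rewrite mulr_ge0 // mulr_ge0.
  by rewrite /sOf /aOf !mulrA.
by rewrite -mulr_sumr ler_wpM2l.
Qed.
Lemma weight_ge0 (l : seq (Z * S)) D cur w : 0 <= w ->
  0 <= (foldl (step M H K delta init tb) (D, cur, w) l).2.
Proof.
case: Mv => tr0 _ pz0 _ _.
elim: l D cur w => [|o l IH] D cur w w0 //.
change (0 <= (foldl (step M H K delta init tb) (step M H K delta init tb (D, cur, w) o) l).2).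
rewrite stepE; apply: IH.
by rewrite mulr_ge0 // mulr_ge0.
Qed.

Lemma sum_pz_trans s a : \sum_(o : Z * S) pz M s a o.1 * trans M s o.1 o.2 = 1.
Proof.
case: Mv => _ tr1 _ pz1 _.
rewrite -(pair_big predT predT (fun z s' => pz M s a z * trans M s z s')) /=.
rewrite -(pz1 s a); apply: eq_bigr => z _.
by rewrite -mulr_sumr tr1 mulr1.
Qed.

Lemma mass1 n : \sum_(om : n.-tuple (Z * S))
     (let: (D', _, w') := foldl (step M H K delta init tb) ([::], init [::], 1) om in w') = 1.
Proof.
set L := \sum_(om : _) _.
have E (c : R) : \sum_(om : n.-tuple (Z * S))
     (let: (D', _, w') := foldl (step M H K delta init tb) ([::], init [::], 1) om in w' * c)
     = L * c.
  rewrite /L mulr_suml; apply: eq_bigr => om _.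
  by case: foldl => [[]].
have HGc (c : R) : forall D s a, \sum_(o : Z * S) pz M s a o.1 * trans M s o.1 o.2 *
       (fun _ => c) (rcons D (s, a, o.1, o.2)) <= (fun _ => c) D.
  by move=> D s a; rewrite -mulr_suml sum_pz_trans mul1r.
have h1 := @supermart (fun _ => 1) (HGc 1) n [::] (init [::]) 1 ler01.
have h2 := @supermart (fun _ => -1) (HGc (-1)) n [::] (init [::]) 1 ler01.
rewrite /= E in h1; rewrite /= E in h2.
lra.
Qed.

End Mart.
Lemma expR_le_quad (R : realType) (x : R) : x <= 1/2 -> expR x <= 1 + x + 2 * x ^+ 2.
Proof.
move=> hx.
have h1 : 0 < 1 - x by lra.
have h2 : 1 - x <= expR (- x) by have := expR_ge1Dx (- x); lra.
have h3 : expR x <= (1 - x)^-1.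
  rewrite -div1r ler_pdivlMr //.
  apply: le_trans (_ : expR x * expR (- x) <= 1); last by rewrite expRxMexpNx_1.
  by rewrite ler_wpM2l // expR_ge0.

have h4 : (1 - x)^-1 <= 1 + x + 2 * x ^+ 2.
  rewrite -div1r ler_pdivrMr //.
  have h : 0 <= x ^+ 2 * (1 - 2 * x) by rewrite mulr_ge0 ?sqr_ge0 //; lra.
  rewrite -subr_ge0.
  suff -> : (1 + x + 2 * x ^+ 2) * (1 - x) - 1 = x ^+ 2 * (1 - 2 * x) by [].
  by rewrite !expr2; ring.
exact: le_trans h3 h4.
Qed.

Lemma exp_avg (R : realType) (T : finType) (t d : T -> R) (c lam : R) :
  (forall y, 0 <= t y) -> \sum_y t y = 1 -> \sum_y t y * d y = 0 ->
  (forall y, - c <= d y <= c) -> 0 <= lam -> lam * c <= 1/2 ->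
  \sum_y t y * expR (lam * d y) <= expR (2 * lam ^+ 2 * c ^+ 2).
Proof.
move=> t0 t1 td dc l0 lc.
apply: le_trans (_ : \sum_y t y * (1 + lam * d y + 2 * (lam ^+ 2 * c ^+ 2))
  <= _).
  apply: ler_sum => y _; apply: ler_wpM2l => //.
  apply: le_trans (expR_le_quad _) _.
    have := dc y => /andP[h1 h2].
    have : lam * d y <= lam * c by rewrite ler_wpM2l.
    lra.
  rewrite lerD2l ler_wpM2l // exprMn ler_wpM2l ?sqr_ge0 //.
  have := dc y => /andP[h1 h2].
  rewrite !expr2; nra.
rewrite (eq_bigr (fun y => t y + lam * (t y * d y) + t y * (2 * (lam ^+ 2 * c ^+ 2)))); last first.
  by move=> y _; ring.
rewrite !big_split /= -!mulr_sumr -!mulr_suml td t1 mulr0 addr0 mul1r.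
have := expR_ge1Dx (2 * lam ^+ 2 * c ^+ 2).
by rewrite !mulrA.
Qed.

Section Bad.
Variables (R : realType) (S A Z : finType) (M : cmdp R S A Z) (H K : nat).
Variables (delta : R) (init : seq (tup S A Z) -> S) (tb : (A -> R) -> A).
Hypothesis Mv : valid_cmdp M.
Variables (s0 : S) (z0 : Z) (V : S -> R) (n : nat).

Definition ysq (D : seq (tup S A Z)) : seq S :=
  [seq x.2 | x <- D & (x.1.1.1 == s0) && (x.1.2 == z0)].
Definition PV : R := \sum_y trans M s0 z0 y * V y.
Definition Xn D : R := \sum_(y <- take n (ysq D)) (PV - V y).
Definition Gf (lam : R) D : R :=
  expR (lam * Xn D - 2 * lam ^+ 2 * H%:R ^+ 2 * (size (take n (ysq D)))%:R).

Lemma ysq_rcons D s a z s' :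
  ysq (rcons D (s, a, z, s')) =
  if (s == s0) && (z == z0) then rcons (ysq D) s' else ysq D.
Proof. by rewrite /ysq filter_rcons /=; case: ifP => //; rewrite map_rcons. Qed.

Hypothesis V0 : forall y, 0 <= V y <= H%:R.

Lemma PV_bd : 0 <= PV <= H%:R.
Proof.
case: Mv => tr0 tr1 _ _ _.
apply/andP; split.
  by apply: sumr_ge0 => y _; rewrite mulr_ge0 //; case/andP: (V0 y).
apply: le_trans (_ : \sum_y trans M s0 z0 y * H%:R <= _).
  by apply: ler_sum => y _; rewrite ler_wpM2l //; case/andP: (V0 y).
by rewrite -mulr_suml tr1 mul1r.
Qed.

Lemma G_step (lam : R) D s a z : 0 <= lam -> lam * H%:R <= 1/2 ->
  \sum_(s' : S) trans M s z s' * Gf lam (rcons D (s, a, z, s')) <= Gf lam D.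
Proof.
move=> l0 lH.
case: (Mv) => tr0 tr1 _ _ _.
have [hc|hc] := boolP [&& s == s0, z == z0 & (size (ysq D) < n)%N]; last first.
  rewrite (eq_bigr (fun s' => trans M s z s' * Gf lam D)).
    by rewrite -mulr_suml tr1 mul1r.
  move=> s' _; congr (_ * _).
  rewrite /Gf /Xn ysq_rcons; case: ifP => // /andP[e1 e2].
  move: hc; rewrite e1 e2 /= -leqNgt => hn.
  by rewrite -cats1 takel_cat.
case/and3P: hc => /eqP es /eqP ez hn; subst s z.
have ET s' : take n (ysq (rcons D (s0, a, z0, s'))) = rcons (ysq D) s'.
  by rewrite ysq_rcons !eqxx /= take_oversize // size_rcons.
have ET0 : take n (ysq D) = ysq D by rewrite take_oversize // ltnW.
rewrite (eq_bigr (fun s' => Gf lam D * expR (- (2 * lam ^+ 2 * H%:R ^+ 2)) *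
      (trans M s0 z0 s' * expR (lam * (PV - V s'))))); last first.
  move=> s' _; rewrite /Gf /Xn ET ET0 size_rcons big_rcons /= -!expRD.
  rewrite [RHS]mulrCA -expRD; congr (_ * expR _).
  rewrite -addn1 natrD; ring.
rewrite -mulr_sumr -[X in _ <= X]mulr1 -mulrA.
rewrite ler_pM2l; last exact: expR_gt0.
have hb : \sum_i trans M s0 z0 i * expR (lam * (PV - V i)) <= expR (2 * lam ^+ 2 * H%:R ^+ 2).
  apply: exp_avg => //.
  - rewrite (eq_bigr (fun y => PV * trans M s0 z0 y - trans M s0 z0 y * V y)).
      by rewrite big_split /= -mulr_sumr tr1 mulr1 sumrN /PV subrr.
    by move=> y _; ring.
  - move=> y; have := V0 y; have := PV_bd; move=> /andP[? ?] /andP[? ?].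
    apply/andP; split; lra.
apply: le_trans (ler_wpM2l (expR_ge0 _) hb) _.
by rewrite mulrC expRxMexpNx_1.
Qed.

Lemma G_super (lam : R) : 0 <= lam -> lam * H%:R <= 1/2 ->
  forall D s a, \sum_(o : Z * S) pz M s a o.1 * trans M s o.1 o.2 *
       Gf lam (rcons D (s, a, o.1, o.2)) <= Gf lam D.
Proof.
move=> l0 lH D s a.
case: (Mv) => _ _ pz0 pz1 _.
rewrite -(pair_big predT predT (fun z s' => pz M s a z * trans M s z s' * Gf lam (rcons D (s, a, z, s')))) /=.
apply: le_trans (_ : \sum_z pz M s a z * Gf lam D <= _); last first.
  by rewrite -mulr_suml pz1 mul1r.
apply: ler_sum => z _.
rewrite (eq_bigr (fun s' => pz M s a z * (trans M s z s' * Gf lam (rcons D (s, a, z, s'))))); last first.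
  by move=> s' _; rewrite mulrA.
by rewrite -mulr_sumr; apply: ler_wpM2l => //; apply: G_step.
Qed.

Definition badE (th : R) D : bool := (n <= size (ysq D))%N && (th <= Xn D).

Lemma bad_bound (lam th : R) m : 0 <= lam -> lam * H%:R <= 1/2 ->
  \sum_(om : m.-tuple (Z * S))
    (let: (D, _, w) := foldl (step M H K delta init tb) ([::], init [::], 1) om in
       w * (badE th D)%:R)
  <= expR (2 * lam ^+ 2 * H%:R ^+ 2 * n%:R - lam * th).
Proof.
move=> l0 lH.
set c := expR _.
have key D : (badE th D)%:R <= c * Gf lam D.
  case hb: (badE th D); last by rewrite mulr_ge0 // expR_ge0.
  move/andP: hb => [hn ht].
  rewrite /c /Gf size_takel // -expRD -expR0 ler_expR.
  have : lam * th <= lam * Xn D by rewrite ler_wpM2l.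
  lra.
apply: le_trans (_ : \sum_(om : m.-tuple (Z * S))
    (let: (D, _, w) := foldl (step M H K delta init tb) ([::], init [::], 1) om in
       c * (w * Gf lam D)) <= _).
  apply: ler_sum => om _.
  have := @weight_ge0 _ _ _ _ M H K delta init tb Mv om [::] (init [::]) 1 ler01.
  case: foldl => [[D cur] w] /= w0.
  by rewrite mulrCA ler_wpM2l.
rewrite (eq_bigr (fun om : m.-tuple (Z * S) => c * (let: (D, _, w) := foldl (step M H K delta init tb) ([::], init [::], 1) om in
       w * Gf lam D))); last first.
  by move=> om _; case: foldl => [[D cur] w].
rewrite -mulr_sumr.
rewrite /c; apply: le_trans (ler_wpM2l (expR_ge0 _) (@supermart _ _ _ _ M H K delta init tb Mv _ (G_super l0 lH) m [::] (init [::]) 1 ler01)) _.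
by rewrite /Gf /Xn /= big_nil mulr0 mul1r mulr0 subr0 expR0 mulr1.
Qed.

End Bad.

Lemma sum_count_memR (R : realType) (T : finType) (l : seq T) (F : T -> R) :
  \sum_(y <- l) F y = \sum_y (count_mem y l)%:R * F y.
Proof.
elim: l => [|x l IH]; first by rewrite big_nil big1 // => y _; rewrite mul0r.
rewrite big_cons IH /=.
rewrite [RHS](eq_bigr (fun y => (x == y)%:R * F y + (count_mem y l)%:R * F y)); last first.
  by move=> y _ /=; rewrite natrD mulrDl.
rewrite big_split /=; congr (_ + _).
rewrite (bigD1 x) //= eqxx mul1r big1 ?addr0 // => y /negbTE.
by rewrite eq_sym => ->; rewrite mul0r.
Qed.

Lemma sum_count_memN (T : finType) (l : seq T) :
  (\sum_y count_mem y l)%N = size l.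
Proof.
elim: l => [|x l IH]; first by rewrite big1.
rewrite /= big_split /= IH (bigD1 x) //= eqxx big1 // => y /negbTE.
by rewrite eq_sym => ->.
Qed.

Section Main.
Variables (R : realType) (S A Z : finType) (M : cmdp R S A Z) (H K : nat).
Variables (delta : R) (init : seq (tup S A Z) -> S) (tb : (A -> R) -> A).
Hypothesis Mv : valid_cmdp M.

Definition pi0 : S -> nat -> A := fun _ _ => tb (fun _ => 0).

Lemma Psa_sum s a : \sum_s' Psa M s a s' = 1.
Proof.
case: Mv => _ tr1 _ pz1 _.
rewrite /Psa exchange_big /= -(pz1 s a); apply: eq_bigr => z _.
by rewrite -mulr_suml tr1 mul1r.
Qed.

Lemma Psa_ge0 s a s' : 0 <= Psa M s a s'.
Proof.
case: Mv => tr0 _ pz0 _ _.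
by apply: sumr_ge0 => z _; rewrite mulr_ge0.
Qed.

Lemma Rsa_bd s a : 0 <= Rsa M s a <= 1.
Proof.
case: Mv => _ _ pz0 pz1 rw.
apply/andP; split.
  by apply: sumr_ge0 => z _; rewrite mulr_ge0 //; case/andP: (rw s z).
rewrite -(pz1 s a); apply: ler_sum => z _.
by rewrite ler_piMl //; case/andP: (rw s z).
Qed.

Lemma Vpi_bd pi m s : 0 <= Vpi M H pi m s <= m%:R.
Proof.
elim: m s => [|m IH] s /=; first by rewrite lexx.
have [r0 r1] := andP (Rsa_bd s (pi s (H - m)%N)).
set a := pi s (H - m)%N.
apply/andP; split.
  rewrite addr_ge0 // sumr_ge0 // => y _; rewrite mulr_ge0 ?Psa_ge0 //.
  by case/andP: (IH y).
rewrite -addn1 natrD addrC lerD //.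
apply: le_trans (_ : \sum_y Psa M s a y * m%:R <= _).
  apply: ler_sum => y _; apply: ler_wpM2l; first exact: Psa_ge0.
  by case/andP: (IH y).
by rewrite -mulr_suml Psa_sum mul1r.
Qed.

Definition Wst (m : nat) (s : S) : R := sup (range (fun pi => Vpi M H pi m s)).

Lemma Wst_hs m s : has_sup (range (fun pi => Vpi M H pi m s)).
Proof.
split; first by exists (Vpi M H pi0 m s), pi0.
exists m%:R => x [pi _ <-]; by case/andP: (Vpi_bd pi m s).
Qed.

Lemma Vpi_le_Wst pi m s : Vpi M H pi m s <= Wst m s.
Proof. by apply: sup_upper_bound (Wst_hs m s) _ _; exists pi. Qed.

Lemma Wst_bd m s : 0 <= Wst m s <= m%:R.
Proof.
apply/andP; split.
  by apply: le_trans (Vpi_le_Wst pi0 m s); case/andP: (Vpi_bd pi0 m s).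
apply: ge_sup; first by exists (Vpi M H pi0 m s), pi0.
by move=> x [pi _ <-]; case/andP: (Vpi_bd pi m s).
Qed.

Lemma bellman_split s a (W : S -> R) :
  Rsa M s a + \sum_s' Psa M s a s' * W s' =
  \sum_z pz M s a z * (rew M s z + \sum_y trans M s z y * W y).
Proof.
rewrite /Rsa /Psa.
rewrite (eq_bigr (fun s' => \sum_z trans M s z s' * pz M s a z * W s')); last first.
  by move=> s' _; rewrite mulr_suml.
rewrite exchange_big /= -big_split /=; apply: eq_bigr => z _.
by rewrite mulrDr mulr_sumr mulrC; congr (_ + _); apply: eq_bigr => y _; ring.
Qed.

Lemma qhat_le_H D V s z : qhat M H K delta D V s z <= H%:R.
Proof. by rewrite /qhat; case: ifP => // _; rewrite ge_min lexx. Qed.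

Lemma Qof_le_H D V s a : Qof M H K delta D V s a <= H%:R.
Proof.
case: Mv => _ _ pz0 pz1 _.
apply: le_trans (_ : \sum_z pz M s a z * H%:R <= _).
  by apply: ler_sum => z _; apply: ler_wpM2l => //; apply: qhat_le_H.
by rewrite -mulr_suml pz1 mul1r.
Qed.

Lemma Phat_ge0 (D : seq (tup S A Z)) y s z : 0 <= Phat R D y s z.
Proof. by rewrite /Phat divr_ge0. Qed.

Definition goodD (D' : seq (tup S A Z)) := forall s z m, (m < H)%N ->
  (0 < N2 D' s z)%N -> bonus H K delta D' s z < H%:R ->
  \sum_y trans M s z y * Wst m y - \sum_y Phat R D' y s z * Wst m y
    < bonus H K delta D' s z.

Lemma optimism D' : goodD D' -> forall m, (m <= H)%N ->
  forall s, Wst m s <= Vrem M H K delta D' m s.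
Proof.
move=> gD; elim=> [|m IH] hm s.
  by case/andP: (Wst_bd 0 s).
have IH' := IH (ltnW hm).
case: (Mv) => tr0 tr1 pz0 pz1 rw.
rewrite /=; apply: ge_sup; first by exists (Vpi M H pi0 m.+1 s), pi0.
move=> x [pi _ <-] /=.
set a := pi s (H - m)%N.
apply: le_trans (_ : Rsa M s a + \sum_s' Psa M s a s' * Wst m s' <= _).
  rewrite lerD2l; apply: ler_sum => y _; apply: ler_wpM2l; first exact: Psa_ge0.
  exact: Vpi_le_Wst.
rewrite bellman_split.
apply: le_trans (_ : Qof M H K delta D' (Vrem M H K delta D' m) s a <= _); last first.
  apply: ub_le_sup; last by exists a.
  by exists H%:R => y [b _ <-]; apply: Qof_le_H.
apply: ler_sum => z _; apply: ler_wpM2l => //.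
set PW := \sum_y trans M s z y * Wst m y.
have PWb : 0 <= PW <= m%:R.
  apply/andP; split.
    by apply: sumr_ge0 => y _; rewrite mulr_ge0 //; case/andP: (Wst_bd m y).
  apply: le_trans (_ : \sum_y trans M s z y * m%:R <= _).
    by apply: ler_sum => y _; apply: ler_wpM2l => //; case/andP: (Wst_bd m y).
  by rewrite -mulr_suml tr1 mul1r.
have mH : m%:R + 1 <= H%:R :> R by rewrite natr1 ler_nat.
have [rw0 rw1] := andP (rw s z).
have hH : rew M s z + PW <= H%:R by case/andP: PWb => _ h; lra.
rewrite /qhat; case: ifP => // hN.
rewrite le_min hH /=.
have PhW : \sum_y Phat R D' y s z * Wst m y <=
           \sum_y Phat R D' y s z * Vrem M H K delta D' m y.
  apply: ler_sum => y _; apply: ler_wpM2l; first exact: Phat_ge0.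
  exact: IH'.
have PhW0 : 0 <= \sum_y Phat R D' y s z * Wst m y.
  by apply: sumr_ge0 => y _; rewrite mulr_ge0 ?Phat_ge0 //; case/andP: (Wst_bd m y).
have [bH|bH] := lerP H%:R (bonus H K delta D' s z).
  by case/andP: PWb => _ h; lra.
have := gD s z m hm hN bH.
rewrite -/PW; lra.
Qed.

Definition bonusN (Nn : nat) : R :=
  7 * H%:R * Lconf S Z H K delta * Num.sqrt (#|S|%:R / Nn%:R).

Definition idxT := (S * Z * 'I_H * 'I_(Tn H K))%type.

Definition badI (i : idxT) (D : seq (tup S A Z)) : bool :=
  let: (s, z, m, j) := i in
  (bonusN j.+1 < H%:R) &&
  badE M s z (Wst m) j.+1 (j.+1%:R * bonusN j.+1) D.

Lemma N3_count (D : seq (tup S A Z)) s z y : N3 D s z y = count_mem y (ysq s z D).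
Proof.
rewrite /N3 /ysq count_map count_filter; apply: eq_count => x /=.
by rewrite /preim /=; case: (x.2 == y); rewrite ?andbT ?andbF.
Qed.

Lemma N2_size (D : seq (tup S A Z)) s z : N2 D s z = size (ysq s z D).
Proof.
rewrite /N2 (eq_bigr (fun y => count_mem y (ysq s z D))); last by move=> y _; rewrite N3_count.
exact: sum_count_memN.
Qed.

Lemma ysq_cat s z (D1 D2 : seq (tup S A Z)) : ysq s z (D1 ++ D2) = ysq s z D1 ++ ysq s z D2.
Proof. by rewrite /ysq filter_cat map_cat. Qed.

Lemma good_of_notbad D k : (k < K)%N -> (forall i, ~~ badI i D) ->
  goodD (take (k * H) D).
Proof.
move=> hk nb s z m hm hN hb.
set D' := take (k * H) D.
set N := N2 D' s z.
have HN : N = size (ysq s z D') by rewrite /N N2_size.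
have hNT : (N.-1 < Tn H K)%N.
  rewrite prednK // HN /Tn.
  apply: (leq_trans (n := size D')).
    by rewrite /ysq size_map size_filter count_size.
  rewrite /D' size_take; case: ifP => h.
    by rewrite leq_mul2r ltnW // orbT.
  apply: leq_trans (_ : (k * H <= K * H)%N).
    by rewrite leqNgt h.
  by rewrite leq_mul2r ltnW // orbT.
have := nb (s, z, Ordinal hm, Ordinal hNT).
rewrite /badI /= prednK //.
have -> : bonusN N = bonus H K delta D' s z by [].
rewrite hb /= /badE negb_and -ltnNge -ltNge.
have Ey : ysq s z D = ysq s z D' ++ ysq s z (drop (k * H) D).
  by rewrite -ysq_cat cat_take_drop.
have hsz : (N <= size (ysq s z D))%N by rewrite Ey size_cat HN leq_addr.
rewrite ltnNge hsz /=.
have htk : take N (ysq s z D) = ysq s z D' by rewrite Ey HN take_size_cat.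
set W := Wst m; set l := ysq s z D'.
set C := \sum_y (count_mem y l)%:R * W y.
have hX : Xn M s z W N D = PV M s z W * N%:R - C.
  rewrite /Xn htk sum_count_memR.
  rewrite (eq_bigr (fun y => PV M s z W * (count_mem y l)%:R - (count_mem y l)%:R * W y)); last first.
    by move=> y _; ring.
  by rewrite big_split /= sumrN -mulr_sumr -natr_sum sum_count_memN -HN.
have hP : \sum_y Phat R D' y s z * W y = C / N%:R.
  rewrite /C mulr_suml; apply: eq_bigr => y _.
  by rewrite /Phat N3_count -/N mulrAC.
have hNpos : 0 < N%:R :> R by rewrite ltr0n.
rewrite hX hP => hlt.
rewrite -(ltr_pM2r hNpos) mulrBl divfK ?gt_eqF //.
rewrite /PV in hlt; lra.
Qed.

Lemma event_of_notbad D : (forall i, ~~ badI i D) -> eventE M H K delta D.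
Proof.
move=> nb; apply/forallP => k; apply/forallP => h; apply/forallP => s.
have gD := good_of_notbad (ltn_ord k) nb.
rewrite /Vstar /Vhat /Vpi_h subSS.
exact: (optimism gD (leq_subr h H) s).
Qed.

Lemma badI_bound (i : idxT) m :
  (0 < H)%N -> 0 < Lconf S Z H K delta ->
  8 <= 49 * Lconf S Z H K delta * #|S|%:R ->
  \sum_(om : m.-tuple (Z * S))
    (let: (D, _, w) := foldl (step M H K delta init tb) ([::], init [::], 1) om in
       w * (badI i D)%:R)
  <= expR (- Lconf S Z H K delta).
Proof.
move=> Hp L0 hL.
case: i => [[[s z] mm] j] /=.
set L := Lconf S Z H K delta.
have [bH|bH] := ltP (bonusN j.+1) H%:R; last first.
  apply: le_trans (_ : \sum_(om : m.-tuple (Z * S)) 0 <= _).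
    apply: ler_sum => om _; case: foldl => [[D cur] w].
    by rewrite /= mulr0.
  by rewrite big1 // expR_ge0.
rewrite (eq_bigr (fun om : m.-tuple (Z * S) =>
   let: (D, _, w) := foldl (step M H K delta init tb) ([::], init [::], 1) om in
       w * (badE M s z (Wst mm) j.+1 (j.+1%:R * bonusN j.+1) D)%:R)); last first.
  by move=> om _; case: foldl => [[D cur] w].
set b := bonusN j.+1.
have Hr : 0 < H%:R :> R by rewrite ltr0n.
set n' := j.+1%:R : R.
have n0 : 0 < n' by rewrite ltr0n.
set sq := Num.sqrt (#|S|%:R / n').
have sq0 : 0 <= sq by apply: sqrtr_ge0.
have sq2 : sq ^+ 2 = #|S|%:R / n' by rewrite sqr_sqrtr // divr_ge0.
have hb : b = 7 * H%:R * L * sq by [].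
have b0 : 0 <= b by rewrite hb !mulr_ge0 // ltW.
set lam := b / (4 * H%:R ^+ 2).
have l0 : 0 <= lam by rewrite divr_ge0 // mulr_ge0 // sqr_ge0.
have lH : lam * H%:R <= 1/2.
  rewrite /lam expr2.
  have -> : b / (4 * (H%:R * H%:R)) * H%:R = b / (4 * H%:R) :> R.
    by field; rewrite gt_eqF.
  rewrite ler_pdivrMr ?mulr_gt0 //; have := bH; rewrite -/b; lra.
have V0 : forall y, 0 <= Wst mm y <= H%:R.
  move=> y; case/andP: (Wst_bd mm y) => h1 h2; rewrite h1 /=.
  by apply: le_trans h2 _; rewrite ler_nat ltnW.
apply: le_trans (bad_bound K delta init tb Mv s z j.+1 V0 (n' * b) m l0 lH) _.
rewrite ler_expR.
have E1 : 2 * lam ^+ 2 * H%:R ^+ 2 * n' - lam * (n' * b) = - (n' * b ^+ 2) / (8 * H%:R ^+ 2).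
  by rewrite /lam; field; rewrite gt_eqF.
have E2 : n' * b ^+ 2 = 49 * H%:R ^+ 2 * L ^+ 2 * #|S|%:R.
  rewrite hb !exprMn sq2; field.
  by rewrite addrC natr1 pnatr_eq0.
rewrite (_ : j.+1%:R = n') // E1 E2.
have -> : - (49 * H%:R ^+ 2 * L ^+ 2 * #|S|%:R) / (8 * H%:R ^+ 2) = - (L * (49 * L * #|S|%:R)) / 8.
  by field; rewrite gt_eqF.
rewrite ler_pdivrMr //.
have : 8 * L <= L * (49 * L * #|S|%:R) by rewrite mulrC ler_wpM2l // ltW.
lra.
Qed.

Lemma main_bound : 0 < delta -> delta < 1 -> (0 < H)%N -> (0 < K)%N ->
  1 - delta <= probE M H K delta init tb.
Proof.
move=> d0 d1 Hp Kp.
case: (Mv) => tr0 tr1 pz0 pz1 rw.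
have [z0 _] : exists z : Z, true.
  case: (pickP (@predT Z)) => [z _|h]; first by exists z.
  have := pz1 (init [::]) (tb (fun _ => 0)); rewrite big_pred0 // => /eqP.
  by rewrite eq_sym oner_eq0.
have Sp : (0 < #|S|)%N by apply/card_gt0P; exists (init [::]).
have Zp : (0 < #|Z|)%N by apply/card_gt0P; exists z0.
set N0 := (5 * #|S| * H * K * #|Z| * Tn H K)%N.
have N0p : (0 < N0)%N by rewrite /N0 /Tn !muln_gt0 Sp Hp Kp Zp.
have N0r : 5 <= N0%:R :> R.
  rewrite ler_nat /N0 -!mulnA leq_pmulr //.
  by rewrite /Tn !muln_gt0 Sp Hp Kp Zp.
set x := N0%:R / delta.
have x0 : 0 < x by rewrite divr_gt0 // ltr0n.
have x5 : 5 <= x.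
  rewrite /x ler_pdivlMr //.
  have : 5 * delta <= 5 by lra.
  lra.
set L := Lconf S Z H K delta.
have hLx : L = ln x by [].
have eL : expR (- L) = delta / N0%:R.
  rewrite hLx expRN lnK ?posrE // /x invf_div //.
have xi : x^-1 * x = 1 by rewrite mulVf // gt_eqF.
have xi0 : 0 < x^-1 by rewrite invr_gt0.
have L45 : 4/5 <= L.
  have h1 : -1 < x^-1 - 1 by lra.
  have := le_ln1Dx h1.
  rewrite (_ : 1 + (x^-1 - 1) = x^-1); last by ring.
  rewrite lnV ?posrE // -hLx => h2.
  have : x^-1 * 5 <= x^-1 * x by rewrite ler_wpM2l // ltW.
  rewrite xi => h3.
  lra.
have L0 : 0 < L by lra.
have hL : 8 <= 49 * L * #|S|%:R.
  have : 1 <= #|S|%:R :> R by rewrite ler1n.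
  nra.
set F := fun om : (Tn H K).-tuple (Z * S) =>
  foldl (step M H K delta init tb) ([::], init [::], 1) om.
have hB : \sum_(i : idxT) \sum_(om : (Tn H K).-tuple (Z * S))
    (let: (D, _, w) := F om in w * (badI i D)%:R) <= delta.
  apply: le_trans (_ : \sum_(i : idxT) expR (- L) <= _).
    by apply: ler_sum => i _; apply: badI_bound.
  rewrite sumr_const eL /idxT !card_prod !card_ord.
  rewrite -[X in X <= _]mulr_natr mulrAC ler_pdivrMr ?ltr0n // ler_wpM2l ?ltW //.
  rewrite ltr_nat /N0.
  rewrite /Tn; nia.
have hM := mass1 H K delta init tb Mv (Tn H K).
apply: le_trans (_ : \sum_(om : (Tn H K).-tuple (Z * S)) (let: (D, _, w) := F om in w) -
   \sum_(i : idxT) \sum_(om : (Tn H K).-tuple (Z * S))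
    (let: (D, _, w) := F om in w * (badI i D)%:R) <= _).
  by rewrite -/F in hM; rewrite hM; lra.
rewrite exchange_big /= -sumrB /probE /run -/F.
apply: ler_sum => om _.
have := weight_ge0 H K delta init tb Mv om [::] (init [::]) ler01.
rewrite -/(F om); case: (F om) => [[D cur] w] /= w0.
have sum0 : 0 <= \sum_(i : idxT) w * (badI i D)%:R.
  by apply: sumr_ge0 => i _; rewrite mulr_ge0.
case hE: (eventE M H K delta D).
  by rewrite mulr1; lra.
case: (pickP (fun i => badI i D)) => [i hi|h]; last first.
  by move: hE; rewrite event_of_notbad // => i; rewrite h.
rewrite mulr0 subr_le0 (bigD1 i) //= hi mulr1 lerDl.
by apply: sumr_ge0 => j _; rewrite mulr_ge0.
Qed.

End Main.

Unset Implicit Arguments.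
Set Strict Implicit.

Theorem lemma1 (R : realType) (S A Z : finType) (M : cmdp R S A Z) (H K : nat)
  (delta : R) (init : seq (tup S A Z) -> S) (tb : (A -> R) -> A) :
  valid_cmdp M ->
  (forall (f : A -> R) (a : A), f a <= f (tb f)) ->
  0 < delta ->
  1 - delta <= probE M H K delta init tb.
Proof.
move=> Mv _ d0.
have [d1|d1] := lerP 1 delta.
  apply: le_trans (_ : 0 <= _); first lra.
  rewrite /probE /run; apply: sumr_ge0 => om _.
  have := weight_ge0 H K delta init tb Mv om [::] (init [::]) ler01.
  by case: foldl => [[D cur] w] /= w0; rewrite mulr_ge0.
have [H0|Hp] := posnP H; last have [K0|Kp] := posnP K; last exact: main_bound.
- have hM := mass1 H K delta init tb Mv (Tn H K).
  rewrite /probE /run (eq_bigr (fun om : (Tn H K).-tuple (Z * S) =>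
      let: (D', _, w') := foldl (step M H K delta init tb) ([::], init [::], 1) om in w')).
    by rewrite hM; lra.
  move=> om _; case: foldl => [[D cur] w].
  have -> : eventE M H K delta D.
    apply/forallP => k; apply/forallP => h; case: h; rewrite H0 //.
  by rewrite mulr1.
- have hM := mass1 H K delta init tb Mv (Tn H K).
  rewrite /probE /run (eq_bigr (fun om : (Tn H K).-tuple (Z * S) =>
      let: (D', _, w') := foldl (step M H K delta init tb) ([::], init [::], 1) om in w')).
    by rewrite hM; lra.
  move=> om _; case: foldl => [[D cur] w].
  have -> : eventE M H K delta D.
    apply/forallP => k; case: k; rewrite K0 //.
  by rewrite mulr1.
Qed.
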